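(* Let $(V,\|\cdot\|)$ be a normed plane and let $x,y\in V$ be distinct. Then $\mathrm{bis}(x,y)$ contains at most one line. If moreover $[xy]$ is parallel to some nondegenerate segment of the unit circle $S$ and $\mathrm{bis}(x,y)$ contains a line, then this line is the line through the centers of the two circles which contain $[xy]$ as a maximal segment.
   Context: A normed (Minkowski) plane $(V,\|\cdot\|)$ is a two-dimensional real vector space with a norm; $S=\{v:\|v\|=1\}$ is its unit circle. For distinct $x,y$, $\mathrm{bis}(x,y)=\{z\in V:\|z-x\|=\|z-y\|\}$. A circle with center $c$ and radius $\lambda>0$ is $c+\lambda S$. A maximal segment of a circle is a nondegenerate segment contained in the circle that is not properly contained in any other segment contained in that circle. Fact used in the statement: if $[xy]$ is parallel to a nondegenerate segment of $S$, then there are exactly two circles containing $[xy]$ as a maximal segment. *)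

(* Defs.v *)
(* classical reals. A normed plane is modelled as R^2 with an
   arbitrary norm (every 2-dim real normed space is linearly isometric to one). *)
From Stdlib Require Import Reals.
Open Scope R_scope.

Definition V : Type := (R * R)%type.
Definition vzero : V := (0, 0).
Definition vadd (u v : V) : V := (fst u + fst v, snd u + snd v).
Definition vsub (u v : V) : V := (fst u - fst v, snd u - snd v).
Definition vscal (a : R) (v : V) : V := (a * fst v, a * snd v).

Record is_norm (N : V -> R) : Prop := {
  norm_definite : forall v, N v = 0 -> v = vzero;
  norm_homog : forall (a : R) v, N (vscal a v) = Rabs a * N v;
  norm_triangle : forall u v, N (vadd u v) <= N u + N v
}.

Definition unit_circle (N : V -> R) (v : V) : Prop := N v = 1.

(* circle with center c and radius lam (lam > 0 is required separately) : c + lam S *)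
Definition circle (N : V -> R) (c : V) (lam : R) (z : V) : Prop := N (vsub z c) = lam.

Definition bis (N : V -> R) (x y : V) (z : V) : Prop := N (vsub z x) = N (vsub z y).

Definition segment (a b : V) (z : V) : Prop :=
  exists t, 0 <= t <= 1 /\ z = vadd (vscal (1 - t) a) (vscal t b).

(* line through p with direction d (d <> 0 required separately) *)
Definition line (p d : V) (z : V) : Prop := exists t : R, z = vadd p (vscal t d).

Definition subset (A B : V -> Prop) : Prop := forall z, A z -> B z.
Definition set_eq (A B : V -> Prop) : Prop := forall z, A z <-> B z.

Definition is_line (L : V -> Prop) : Prop :=
  exists p d, d <> vzero /\ set_eq L (line p d).

Definition nondeg_segment_in (C : V -> Prop) (a b : V) : Prop :=
  a <> b /\ subset (segment a b) C.

Definition maximal_segment (C : V -> Prop) (a b : V) : Prop :=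
  nondeg_segment_in C a b /\
  forall a' b', subset (segment a' b') C ->
    subset (segment a b) (segment a' b') -> set_eq (segment a b) (segment a' b').

Definition parallel (x y a b : V) : Prop :=
  exists k : R, vsub y x = vscal k (vsub b a).

(* Main.v *)
Require Import Defs.
From Stdlib Require Import Reals Lra Psatz.
Open Scope R_scope.

Lemma vext (u v : V) : fst u = fst v -> snd u = snd v -> u = v.
Proof. destruct u, v; simpl; intros; subst; reflexivity. Qed.

Ltac vsolve := apply vext; unfold vadd, vsub, vscal, vzero; simpl; field.

Section Nm.
Variable N : V -> R.
Hypothesis hN : is_norm N.

Lemma Nzero : N vzero = 0.
Proof. replace vzero with (vscal 0 vzero) by vsolve.
 rewrite (norm_homog _ hN), Rabs_R0; ring. Qed.

Lemma Nvopp v : N (vscal (-1) v) = N v.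
Proof. rewrite (norm_homog _ hN). rewrite Rabs_left by lra. ring. Qed.

Lemma Nge0 v : 0 <= N v.
Proof. pose proof (norm_triangle _ hN v (vscal (-1) v)) as H.
 rewrite Nvopp in H. replace (vadd v (vscal (-1) v)) with vzero in H by vsolve.
 rewrite Nzero in H; lra. Qed.

Lemma Nposv v : v <> vzero -> 0 < N v.
Proof. intros H. destruct (Nge0 v) as [|E]; auto. exfalso; apply H.
 apply (norm_definite _ hN); auto. Qed.

Definition phi A B s := N (vadd A (vscal s B)).

Lemma conv A B p q r : p < q < r ->
 (r-p) * phi A B q <= (r-q) * phi A B p + (q-p) * phi A B r.
Proof.
 intros Hp. unfold phi.
 assert (E: vscal (r-p) (vadd A (vscal q B)) = vadd (vscal (r-q) (vadd A (vscal p B))) (vscal (q-p) (vadd A (vscal r B)))) by vsolve.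
 pose proof (norm_homog _ hN (r-p) (vadd A (vscal q B))) as H0.
 rewrite E in H0. rewrite Rabs_right in H0 by lra.
 pose proof (norm_triangle _ hN (vscal (r-q) (vadd A (vscal p B))) (vscal (q-p) (vadd A (vscal r B)))) as H1.
 rewrite !(norm_homog _ hN) in H1. rewrite (Rabs_right (r-q)), (Rabs_right (q-p)) in H1 by lra. lra.
Qed.

Lemma C_le A B p q r K : p < q < r -> phi A B p <= K -> phi A B r <= K -> phi A B q <= K.
Proof. intros H H1 H2. pose proof (conv A B p q r H).
 apply (Rmult_le_reg_l (r-p)); [lra|]. nra. Qed.

Lemma C_ge A B p q r K : p < q < r -> K <= phi A B q -> phi A B p <= K -> K <= phi A B r.
Proof. intros H H1 H2. pose proof (conv A B p q r H).
 apply (Rmult_le_reg_l (q-p)); [lra|]. nra. Qed.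

Lemma C_gem A B p q r K : p < q < r -> K <= phi A B q -> phi A B r <= K -> K <= phi A B p.
Proof. intros H H1 H2. pose proof (conv A B p q r H).
 apply (Rmult_le_reg_l (r-q)); [lra|]. nra. Qed.

Lemma phi_lb A B s : Rabs s * N B - N A <= phi A B s.
Proof. unfold phi. pose proof (norm_triangle _ hN (vadd A (vscal s B)) (vscal (-1) A)) as H.
 replace (vadd (vadd A (vscal s B)) (vscal (-1) A)) with (vscal s B) in H by vsolve.
 rewrite Nvopp, (norm_homog _ hN) in H. lra. Qed.

Lemma phi_ub A B s : phi A B s <= N A + Rabs s * N B.
Proof. unfold phi. pose proof (norm_triangle _ hN A (vscal s B)) as H.
 rewrite (norm_homog _ hN) in H. lra. Qed.
End Nm.

Definition cross (u v : V) := fst u * snd v - snd u * fst v.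

Lemma inter p d q e : cross d e <> 0 -> exists t s, vadd p (vscal t d) = vadd q (vscal s e).
Proof. intros. exists (cross (vsub q p) e / cross d e), (cross (vsub q p) d / cross d e).
 destruct p, d, q, e; unfold cross, vsub, vadd, vscal in *; simpl in *. apply vext; simpl; field; auto. Qed.

Lemma par_dir d e : e <> vzero -> cross d e = 0 -> exists k, d = vscal k e.
Proof. destruct d as [d1 d2], e as [e1 e2]; unfold cross; simpl; intros He Hc.
 assert (HE: 0 < e1*e1 + e2*e2).
 { destruct (Req_dec e1 0); destruct (Req_dec e2 0). subst; exfalso; apply He; reflexivity. all: nra. }
 exists ((d1*e1 + d2*e2)/(e1*e1+e2*e2)). unfold vscal; simpl.
 assert (H1 : d1*(e1*e1+e2*e2) - (d1*e1+d2*e2)*e1 = e2*(d1*e2 - d2*e1)) by ring.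
 assert (H2 : d2*(e1*e1+e2*e2) - (d1*e1+d2*e2)*e2 = - e1*(d1*e2 - d2*e1)) by ring.
 rewrite Hc in H1, H2. apply vext; simpl; field_simplify_eq; lra.
Qed.

Lemma wnz x y : x <> y -> vsub y x <> vzero.
Proof. intros H E. apply H. destruct x, y; unfold vsub, vzero in E; simpl in E.
 injection E; intros; f_equal; lra. Qed.

Lemma step1 N (hN : is_norm N) x y (hxy : x <> y) p d : d <> vzero ->
  subset (line p d) (bis N x y) -> cross d (vsub y x) <> 0.
Proof.
 intros Hd Hs Hc. destruct (par_dir d (vsub y x) (wnz x y hxy) Hc) as [k Hk].
 assert (Hk0 : k <> 0). { intro; subst. apply Hd. vsolve. }
 set (w := vsub y x) in *. set (A := vsub p x).
 assert (Hper : forall s, phi N A w s = phi N A w (s-1)).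
 { intro s. assert (Hl : line p d (vadd p (vscal (s/k) d))) by (exists (s/k); reflexivity).
   specialize (Hs _ Hl). unfold bis in Hs. unfold phi.
   replace (vadd A (vscal s w)) with (vsub (vadd p (vscal (s / k) d)) x)
     by (subst d A w; vsolve; auto).
   replace (vadd A (vscal (s-1) w)) with (vsub (vadd p (vscal (s / k) d)) y)
     by (subst d A w; vsolve; auto). exact Hs. }
 pose proof (Nposv N hN w (wnz x y hxy)) as HW.
 set (K := phi N A w 0).
 set (R0 := 2 + (K + N A) / N w).
 assert (HR : 1 < R0).
 { unfold R0. pose proof (Nge0 N hN A). assert (0 <= K) by (apply Nge0; auto).
   assert (0 <= (K + N A) / N w) by (apply Rmult_le_pos; [lra| left; apply Rinv_0_lt_compat; lra]). lra. }
 assert (H1 : phi N A w R0 <= K).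
 { apply (C_gem N hN A w 0 (R0-1) R0); [lra| rewrite <- Hper; lra | lra]. }
 pose proof (phi_lb N hN A w R0) as H2. rewrite Rabs_right in H2 by lra.
 assert (R0 * N w = 2 * N w + (K + N A)) by (unfold R0; field; lra). lra.
Qed.

Lemma step2 N (hN : is_norm N) x y (hxy : x <> y) p d : d <> vzero ->
  subset (line p d) (bis N x y) -> line p d (vadd x (vscal (1/2) (vsub y x))).
Proof.
 intros Hd Hs. pose proof (step1 N hN x y hxy p d Hd Hs) as Hc.
 destruct (inter p d x (vsub y x) Hc) as [t [s Ht]].
 assert (Hl : line p d (vadd p (vscal t d))) by (exists t; reflexivity).
 specialize (Hs _ Hl). unfold bis in Hs. rewrite Ht in Hs.
 replace (vsub (vadd x (vscal s (vsub y x))) x) with (vscal s (vsub y x)) in Hs by vsolve.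
 replace (vsub (vadd x (vscal s (vsub y x))) y) with (vscal (s-1) (vsub y x)) in Hs by vsolve.
 rewrite !(norm_homog _ hN) in Hs.
 pose proof (Nposv N hN _ (wnz x y hxy)).
 assert (Rabs s = Rabs (s-1)) by (apply (Rmult_eq_reg_r (N (vsub y x))); lra).
 assert (s = 1/2) by (revert H0; unfold Rabs; repeat destruct Rcase_abs; lra).
 subst s. exists t. symmetry; exact Ht.
Qed.

Lemma step3 N (hN : is_norm N) x y (hxy : x <> y) p1 d1 p2 d2 :
  d1 <> vzero -> d2 <> vzero ->
  subset (line p1 d1) (bis N x y) -> subset (line p2 d2) (bis N x y) ->
  cross d1 d2 <> 0 -> False.
Proof.
 intros Hd1 Hd2 Hs1 Hs2 Hc.
 destruct (step2 N hN x y hxy p1 d1 Hd1 Hs1) as [t1 Hm1].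
 destruct (step2 N hN x y hxy p2 d2 Hd2 Hs2) as [t2 Hm2].
 set (w := vsub y x) in *.
 assert (Ep1 : p1 = vadd (vadd x (vscal (1/2) w)) (vscal (-t1) d1)) by (rewrite Hm1; vsolve).
 assert (Ep2 : p2 = vadd (vadd x (vscal (1/2) w)) (vscal (-t2) d2)) by (rewrite Hm2; vsolve).
 pose proof (Nposv N hN w (wnz x y hxy)) as HW.
 pose proof (Nposv N hN d1 Hd1) as HD.
 set (W := N w) in *. set (D := N d1) in *.
 set (c2 := cross w d2). set (c12 := cross d1 d2).
 set (Kf := Rabs c2 / Rabs c12).
 assert (HKf : 0 <= Kf).
 { unfold Kf. apply Rmult_le_pos; [apply Rabs_pos|]. left; apply Rinv_0_lt_compat. apply Rabs_pos_lt; auto. }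
 set (T := W + D * Kf + 1).
 assert (HT : 0 < T) by (unfold T; nra).
 set (del := W / (4 * T)).
 assert (Hdel : del * (4 * T) = W) by (unfold del; field; lra).
 assert (Hdel0 : 0 < del) by (unfold del; apply Rdiv_lt_0_compat; lra).
 assert (Hdel1 : del < 1/4) by (unfold T in *; nra).
 set (lam := - del * c2 / c12).
 set (tau := del * cross d1 w / c12).
 assert (Hkey : vadd (vscal lam d1) (vscal del w) = vscal tau d2).
 { unfold lam, tau, c2, c12 in *. unfold cross in *. clearbody w del.
   destruct d1, d2, w; simpl in *. apply vext; unfold vadd, vscal; simpl; field; auto. }
 set (A := vscal lam d1).
 assert (HP : phi N A w (1/2) = phi N A w (-1/2)).
 { assert (Hl : line p1 d1 (vadd p1 (vscal (t1 + lam) d1))) by (exists (t1+lam); reflexivity).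
   specialize (Hs1 _ Hl). unfold bis in Hs1. unfold phi.
   replace (vadd A (vscal (1/2) w)) with (vsub (vadd p1 (vscal (t1 + lam) d1)) x)
     by (rewrite Ep1; unfold A, w; vsolve).
   replace (vadd A (vscal (-1/2) w)) with (vsub (vadd p1 (vscal (t1 + lam) d1)) y)
     by (rewrite Ep1; unfold A, w; vsolve). exact Hs1. }
 assert (HQ : phi N A w (del + 1/2) = phi N A w (del - 1/2)).
 { assert (Hl : line p2 d2 (vadd p2 (vscal (t2 + tau) d2))) by (exists (t2+tau); reflexivity).
   specialize (Hs2 _ Hl). unfold bis in Hs2. unfold phi.
   replace (vsub (vadd p2 (vscal (t2 + tau) d2)) x) with (vadd (vscal (1/2) w) (vscal tau d2)) in Hs2
     by (rewrite Ep2; unfold w; vsolve).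
   replace (vsub (vadd p2 (vscal (t2 + tau) d2)) y) with (vadd (vscal (-1/2) w) (vscal tau d2)) in Hs2
     by (rewrite Ep2; unfold w; vsolve).
   rewrite <- Hkey in Hs2.
   replace (vadd A (vscal (del + 1/2) w)) with (vadd (vscal (1/2) w) (vadd (vscal lam d1) (vscal del w))) by (unfold A; vsolve).
   replace (vadd A (vscal (del - 1/2) w)) with (vadd (vscal (-1/2) w) (vadd (vscal lam d1) (vscal del w))) by (unfold A; vsolve).
   exact Hs2. }

 assert (Hi : phi N A w (del - 1/2) <= (phi N A w (-1/2))).
 { apply (C_le N hN A w (-1/2) (del-1/2) (1/2)); [split; lra|lra|lra]. }
 assert (Hii : phi N A w (1/2) <= phi N A w (del - 1/2)).
 { apply (C_le N hN A w (del-1/2) (1/2) (del+1/2)); try split; lra. }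
 assert (Hiii : (phi N A w (-1/2)) <= phi N A w 0).
 { apply (C_ge N hN A w (-1/2) (del-1/2) 0); [split; lra|lra|lra]. }
 pose proof (phi_ub N hN A w 0) as U. pose proof (phi_lb N hN A w (-1/2)) as L.
  rewrite Rabs_R0 in U. rewrite Rabs_left in L by lra.
 assert (HA : N A = Rabs lam * D) by (unfold A; apply (norm_homog _ hN)).
 assert (Hlam : Rabs lam = del * Kf).
 { unfold lam, Kf. unfold Rdiv. rewrite !Rabs_mult, Rabs_Ropp, Rabs_Rinv by auto.
   rewrite (Rabs_right del) by lra. ring. }
 assert (Hfin : 4 * (del * Kf * D) < W).
 { assert (W * (Kf * D) < W * T) by (apply Rmult_lt_compat_l; [lra| unfold T; lra]). nra. }
 rewrite HA, Hlam in U, L. change (N w) with W in L. clearbody W D del Kf T lam tau A. lra.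
Qed.

Lemma center_pos N (hN : is_norm N) x y (hxy : x <> y) c l s :
  maximal_segment (circle N c l) x y -> 0 < s ->
  bis N x y (vadd c (vscal s (vsub y x))) -> False.
Proof.
 intros [[_ Hsub] Hmaxi] Hs Hb.
 set (w := vsub y x) in *. set (A := vsub x c).
 assert (Hseg : forall r, 0 <= r <= 1 -> phi N A w r = l).
 { intros r Hr. assert (Hz : segment x y (vadd (vscal (1-r) x) (vscal r y))) by (exists r; split; auto).
   specialize (Hsub _ Hz). unfold circle in Hsub. unfold phi.
   replace (vadd A (vscal r w)) with (vsub (vadd (vscal (1 - r) x) (vscal r y)) c) by (unfold A, w; vsolve).
   exact Hsub. }
 unfold bis in Hb.
 replace (vsub (vadd c (vscal s w)) x) with (vscal (-1) (vadd A (vscal (-s) w))) in Hb by (unfold A, w; vsolve).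
 replace (vsub (vadd c (vscal s w)) y) with (vscal (-1) (vadd A (vscal (1-s) w))) in Hb by (unfold A, w; vsolve).
 rewrite !(Nvopp N hN) in Hb. fold (phi N A w (-s)) in Hb. fold (phi N A w (1-s)) in Hb.
 pose proof (Hseg 0 ltac:(lra)) as H0. pose proof (Hseg 1 ltac:(lra)) as H1.
 assert (Hl1 : l <= phi N A w (-s)).
 { apply (C_gem N hN A w (-s) 0 1); [split; lra|lra|lra]. }
 assert (Hl2 : phi N A w (-s) <= l).
 { pose proof (conv N hN A w (-s) (1-s) 1 ltac:(split; lra)) as Hc.
   rewrite <- Hb, H1 in Hc. nra. }
 assert (Hext : forall r, -s <= r <= 1 -> phi N A w r = l).
 { intros r Hr. destruct (Rle_lt_dec 0 r). apply Hseg; lra.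
   destruct (Req_dec r (-s)) as [->|Hne]. lra.
   assert (phi N A w r <= l) by (apply (C_le N hN A w (-s) r 1); [split; lra|lra|lra]).
   assert (l <= phi N A w r) by (apply (C_gem N hN A w r 0 1); [split; lra|lra|lra]).
   lra. }
 set (a' := vadd x (vscal (-s) w)).
 assert (HS1 : subset (segment a' y) (circle N c l)).
 { intros z [t [Ht ->]]. unfold circle.
   replace (vsub (vadd (vscal (1 - t) a') (vscal t y)) c) with (vadd A (vscal (-s + t*(1+s)) w)) by (unfold a', A, w; vsolve).
   apply Hext; nra. }
 assert (HS2 : subset (segment x y) (segment a' y)).
 { intros z [t [Ht ->]]. exists ((t+s)/(1+s)).
   assert (Hu : (t+s)/(1+s) * (1+s) = t + s) by (field; lra).
   split. split; nra.
   unfold a', w; vsolve; lra. }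
 specialize (Hmaxi a' y HS1 HS2 a').
 assert (Ha : segment a' y a') by (exists 0; split; [lra| vsolve]).
 apply Hmaxi in Ha. destruct Ha as [t [Ht Ha]].
 apply hxy. unfold a', w in Ha. destruct x as [x1 x2], y as [y1 y2].
 unfold vadd, vsub, vscal in Ha; simpl in Ha. injection Ha; intros E2 E1.
 assert (Q1 : (t+s)*(y1-x1) = 0) by lra. assert (Q2 : (t+s)*(y2-x2) = 0) by lra.
 apply Rmult_integral in Q1. apply Rmult_integral in Q2.
 f_equal; lra.
Qed.

Lemma seg_sym a b z : segment a b z -> segment b a z.
Proof. intros [t [Ht ->]]. exists (1-t). split; [lra|vsolve]. Qed.

Lemma maximal_sym C x y : maximal_segment C x y -> maximal_segment C y x.
Proof.
 intros [[Hne Hsub] Hm]. split. split. auto.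
 intros z Hz; apply Hsub, seg_sym, Hz.
 intros a' b' H1 H2.
 assert (H3 : subset (segment x y) (segment a' b')) by (intros z Hz; apply H2, seg_sym, Hz).
 specialize (Hm a' b' H1 H3). intro z; split.
 intro Hz; apply Hm, seg_sym, Hz.
 intro Hz; apply seg_sym, Hm, Hz.
Qed.

Lemma center_neg N (hN : is_norm N) x y (hxy : x <> y) c l s :
  maximal_segment (circle N c l) x y -> s < 0 ->
  bis N x y (vadd c (vscal s (vsub y x))) -> False.
Proof.
 intros M Hs Hb. apply (center_pos N hN y x (fun e => hxy (eq_sym e)) c l (-s)).
 apply maximal_sym, M. lra.
 replace (vadd c (vscal (- s) (vsub x y))) with (vadd c (vscal s (vsub y x))) by vsolve.
 unfold bis in *. symmetry; exact Hb.
Qed.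

Lemma center_on_line N (hN : is_norm N) x y (hxy : x <> y) p d c l :
  d <> vzero -> subset (line p d) (bis N x y) ->
  maximal_segment (circle N c l) x y -> line p d c.
Proof.
 intros Hd Hs M. pose proof (step1 N hN x y hxy p d Hd Hs) as Hc.
 assert (Hc' : cross (vsub y x) d <> 0) by (unfold cross in *; intro; apply Hc; lra).
 destruct (inter c (vsub y x) p d Hc') as [s [t H]].
 assert (Hb : bis N x y (vadd c (vscal s (vsub y x)))).
 { rewrite H. apply Hs. exists t; reflexivity. }
 destruct (Rtotal_order s 0) as [Hn|[->|Hp]].
 - exfalso; exact (center_neg N hN x y hxy c l s M Hn Hb).
 - exists t. rewrite <- H. vsolve.
 - exfalso; exact (center_pos N hN x y hxy c l s M Hp Hb).
Qed.

Lemma final_line p d c1 c2 : line p d c1 -> line p d c2 -> c1 <> c2 ->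
  set_eq (line p d) (line c1 (vsub c2 c1)).
Proof.
 intros [t1 E1] [t2 E2] Hne.
 assert (Ht : t2 - t1 <> 0) by (intro; apply Hne; subst; f_equal; f_equal; lra).
 intro z; split.
 - intros [t ->]. exists ((t - t1)/(t2 - t1)). subst; vsolve; auto.
 - intros [u ->]. exists (t1 + u*(t2-t1)). subst; vsolve.
Qed.

Lemma line_through p d p' e q k : line p d q -> line p' e q -> d = vscal k e -> k <> 0 ->
  set_eq (line p d) (line p' e).
Proof.
 intros [t1 E1] [t2 E2] Hk Hk0. subst q.
 assert (Ep : p' = vadd (vadd p (vscal t1 d)) (vscal (-t2) e)) by (rewrite E2; vsolve).
 subst p' d. intro z; split.
 - intros [t ->]. exists (t2 + (t - t1)*k). vsolve.
 - intros [t ->]. exists (t1 + (t - t2)/k). vsolve; auto.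
Qed.

Theorem corollary2p1 (N : V -> R) (hN : is_norm N) (x y : V) (hxy : x <> y) :
  (forall L1 L2 : V -> Prop, is_line L1 -> is_line L2 ->
     subset L1 (bis N x y) -> subset L2 (bis N x y) -> set_eq L1 L2)
  /\
  ((exists a b, nondeg_segment_in (unit_circle N) a b /\ parallel x y a b) ->
   forall L : V -> Prop, is_line L -> subset L (bis N x y) ->
   forall (c1 c2 : V) (l1 l2 : R), 0 < l1 -> 0 < l2 -> c1 <> c2 ->
     maximal_segment (circle N c1 l1) x y ->
     maximal_segment (circle N c2 l2) x y ->
     set_eq L (line c1 (vsub c2 c1))).
Proof.
 split.
 - intros L1 L2 [p1 [d1 [Hd1 E1]]] [p2 [d2 [Hd2 E2]]] S1 S2.
   assert (Hs1 : subset (line p1 d1) (bis N x y)) by (intros z Hz; apply S1, E1, Hz).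
   assert (Hs2 : subset (line p2 d2) (bis N x y)) by (intros z Hz; apply S2, E2, Hz).
   destruct (Req_dec (cross d1 d2) 0) as [Hc|Hc].
   + destruct (par_dir d1 d2 Hd2 Hc) as [k Hk].
     assert (Hk0 : k <> 0) by (intro; subst; apply Hd1; vsolve).
     pose proof (line_through p1 d1 p2 d2 _ k (step2 N hN x y hxy p1 d1 Hd1 Hs1)
        (step2 N hN x y hxy p2 d2 Hd2 Hs2) Hk Hk0) as HL.
     intro z. split; intro Hz. apply E2, HL, E1, Hz. apply E1, HL, E2, Hz.
   + exfalso. exact (step3 N hN x y hxy p1 d1 p2 d2 Hd1 Hd2 Hs1 Hs2 Hc).
 - intros _ L [p [d [Hd E]]] S c1 c2 l1 l2 _ _ Hne M1 M2.
   assert (Hs : subset (line p d) (bis N x y)) by (intros z Hz; apply S, E, Hz).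
   pose proof (final_line p d c1 c2 (center_on_line N hN x y hxy p d c1 l1 Hd Hs M1)
      (center_on_line N hN x y hxy p d c2 l2 Hd Hs M2) Hne) as HL.
   intro z. split; intro Hz. apply HL, E, Hz. apply E, HL, Hz.
Qed.
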